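(* Let $X$ be a cycle set. Then the following are equivalent: (1) $X$ is irreducible; (2) there is a finite brace $B$ such that $X\subseteq B$, $X=\{\lambda_b(x)\mid b\in B\}$ and $B=B(x)$ for all $x\in X$.
   Context: A cycle set is a non-empty set $X$ with a binary operation $\cdot$ such that each map $\sigma_x\colon y\mapsto x\cdot y$ is bijective and $(x\cdot y)\cdot(x\cdot z)=(y\cdot x)\cdot(y\cdot z)$ for all $x,y,z\in X$ (equivalently, a q-cycle set $(X,\cdot,:)$ in which the operations $\cdot$ and $:$ coincide). A sub-cycle set of $X$ is a subset closed under the induced structure, i.e. a subset $Y$ that with the operation induced by $\cdot$ is again a cycle set. $X$ is irreducible if $\emptyset$ and $X$ are its only sub-cycle sets. A brace is a triple $(B,+,\circ)$ where $(B,+)$ is an abelian group, $(B,\circ)$ is a group and $a\circ(b+c)=a\circ b-a+a\circ c$ for all $a,b,c\in B$. For $b\in B$, $\lambda_b\colon B\to B$ is the map $\lambda_b(a)=-b+b\circ a$. A brace $B$ carries the cycle set structure $a\cdot c:=\lambda_{a^-}(c)$, where $a^-$ is the inverse of $a$ in $(B,\circ)$, and in (2) $X$ is a sub-cycle set of $B$ with this structure. For $x\in B$, $B(x)$ denotes the smallest sub-brace of $B$ containing $x$. *)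

(* Defs.v *)
From mathcomp Require Import all_boot.
Set Implicit Arguments. Unset Strict Implicit. Unset Printing Implicit Defensive.

Definition is_cycle_set (X : finType) (op : X -> X -> X) : Prop :=
  (forall x : X, bijective (op x)) /\
  (forall x y z : X, op (op x y) (op x z) = op (op y x) (op y z)).

(* The empty set is
   allowed, as in the definition of irreducibility. *)
Definition is_sub_cycle_set (X : finType) (op : X -> X -> X) (Y : {set X}) : Prop :=
  (forall x y, x \in Y -> y \in Y -> op x y \in Y) /\
  (forall x, x \in Y -> {in Y &, injective (op x)}) /\
  (forall x, x \in Y -> forall z, z \in Y -> exists2 y, y \in Y & op x y = z) /\
  (forall x y z, x \in Y -> y \in Y -> z \in Y ->
     op (op x y) (op x z) = op (op y x) (op y z)).

Definition irreducible_cs (X : finType) (op : X -> X -> X) : Prop :=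
  forall Y : {set X}, is_sub_cycle_set op Y -> Y = set0 \/ Y = setT.

Record fin_brace := FinBrace {
  bcar :> finType;
  badd : bcar -> bcar -> bcar;
  bzero : bcar;
  bopp : bcar -> bcar;
  bcirc : bcar -> bcar -> bcar;
  bone : bcar;
  binv : bcar -> bcar;
  baddA : forall a b c, badd a (badd b c) = badd (badd a b) c;
  baddC : forall a b, badd a b = badd b a;
  badd0 : forall a, badd bzero a = a;
  baddN : forall a, badd (bopp a) a = bzero;
  bcircA : forall a b c, bcirc a (bcirc b c) = bcirc (bcirc a b) c;
  bcirc1 : forall a, bcirc bone a = a;
  bcircV : forall a, bcirc (binv a) a = bone;
  bcomp : forall a b c,
    bcirc a (badd b c) = badd (badd (bcirc a b) (bopp a)) (bcirc a c)
}.

Definition blambda (B : fin_brace) (b a : B) : B :=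
  badd (bopp b) (bcirc b a).

(* the cycle set structure of a brace: a . c = lambda_{a^-}(c) *)
Definition bdot (B : fin_brace) (a c : B) : B := blambda (binv a) c.

Definition is_subbrace (B : fin_brace) (S : {set B}) : bool :=
  [&& @bzero B \in S, @bone B \in S,
      [forall a in S, forall b in S, badd a b \in S],
      [forall a in S, bopp a \in S],
      [forall a in S, forall b in S, bcirc a b \in S] &
      [forall a in S, binv a \in S]].

Definition brace_gen (B : fin_brace) (x : B) : {set B} :=
  \bigcap_(S : {set B} | is_subbrace S && (x \in S)) S.

(* Main.v *)
From HB Require Import structures.
Require Import Defs.
From mathcomp Require Import all_boot all_algebra all_fingroup zify.
Set Warnings "-notation-overridden -redundant-canonical-projection -ambiguous-paths".
Import GRing.Theory.
Set Implicit Arguments. Unset Strict Implicit. Unset Printing Implicit Defensive.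

Module GenM.

Section Gen.
Variable B : fin_brace.
Definition BT : Type := bcar B.
HB.instance Definition _ := Choice.on BT.
HB.instance Definition _ := GRing.isZmodule.Build BT (@baddA B) (@baddC B) (@badd0 B) (@baddN B).
Local Open Scope ring_scope.
Implicit Types a b c : BT.
Local Notation "a \o b" := (@bcirc B (a : BT) (b : BT) : BT).
Local Notation lam a b := (@blambda B (a : BT) (b : BT) : BT).

Lemma lamE a b : lam a b = - a + (a \o b). Proof. by []. Qed.
Lemma bcompE a b c : a \o (b + c) = (a \o b) - a + (a \o c). Proof. exact: bcomp. Qed.

Lemma circ0 a : a \o 0 = a.
Proof.
have h := bcompE a 0 0; rewrite addr0 in h.
have : (a \o 0) + 0 = (a \o 0) + (- a + (a \o 0)) by rewrite addr0 addrA -h.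
by move/addrI/eqP; rewrite eq_sym addrC subr_eq0 => /eqP.
Qed.

Lemma one0 : bone B = 0 :> BT.
Proof. by rewrite -[bone B](circ0 (bone B : BT)) bcirc1. Qed.

Lemma circ1l a : bone B \o a = a. Proof. exact: bcirc1. Qed.
Lemma circ0l a : 0 \o a = a. Proof. by rewrite -one0 bcirc1. Qed.
Lemma circA a b c : a \o (b \o c) = (a \o b) \o c. Proof. exact: bcircA. Qed.
Lemma circVl a : binv a \o a = 0. Proof. by rewrite bcircV one0. Qed.
Lemma circVr a : a \o binv a = 0.
Proof.
rewrite -[a \o _]circ0l -(circVl (binv a)) -circA (circA (binv a) a).
by rewrite circVl circ0l circVl.
Qed.
Lemma binvK a : binv (binv a) = a.
Proof.
by rewrite -[binv (binv a)]circ0 -(circVl a) circA circVl circ0l.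
Qed.
Lemma circ_lam a b : a \o b = a + lam a b.
Proof. by rewrite lamE addrA subrr add0r. Qed.
Lemma lamD a b c : lam a (b + c) = lam a b + lam a c.
Proof. by rewrite !lamE bcompE !addrA. Qed.
Lemma lam0 a : lam a 0 = 0. Proof. by rewrite lamE circ0 addNr. Qed.
Lemma lam0l c : lam 0 c = c. Proof. by rewrite lamE circ0l oppr0 add0r. Qed.
Lemma lamN a b : lam a (- b) = - lam a b.
Proof. by apply/eqP; rewrite -subr_eq0 opprK -lamD addNr lam0. Qed.
Lemma lamM a b c : lam (a \o b) c = lam a (lam b c).
Proof.
rewrite [lam b c]lamE lamD lamN !lamE circA opprD opprK.
by rewrite addrA [a - _]addrC addrK.
Qed.
Lemma lamVK a c : lam (binv a) (lam a c) = c.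
Proof. by rewrite -lamM circVl lam0l. Qed.
Lemma lamKV a c : lam a (lam (binv a) c) = c.
Proof. by rewrite -lamM circVr lam0l. Qed.
End Gen.

Lemma inj_onto (T : finType) (A : {set T}) (h : T -> T) :
  {in A, forall x, h x \in A} -> {in A &, injective h} ->
  forall y, y \in A -> exists2 x, x \in A & h x = y.
Proof.
move=> hA hi y yA.
have e : h @: A = A.
  apply/eqP; rewrite eqEcard card_in_imset // leqnn andbT.
  by apply/subsetP => z /imsetP [x xA ->]; apply: hA.
by move: yA; rewrite -{1}e => /imsetP [x xA ->]; exists x.
Qed.

Lemma subcs (X : finType) (op : X -> X -> X) (Y : {set X}) :
  is_cycle_set op -> (forall x y, x \in Y -> y \in Y -> op x y \in Y) ->
  is_sub_cycle_set op Y.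
Proof.
move=> [bij cyc] cl; split; first exact: cl.
split; first by move=> x _ u v _ _; apply: (bij_inj (bij x)).
split; last by move=> *; apply: cyc.
move=> x xY z zY; apply: inj_onto => //; first by move=> u; apply: cl.
by move=> u v _ _; apply: (bij_inj (bij x)).
Qed.

Section Dir21.
Variables (X : finType) (op : X -> X -> X) (B : fin_brace) (f : X -> B).
Hypotheses (cs : is_cycle_set op) (finj : injective f)
  (fhom : forall x y : X, f (op x y) = bdot (f x) (f y)).
Local Open Scope ring_scope.
Local Notation "a \o b" := (@bcirc B (a : BT B) (b : BT B) : BT B).
Local Notation lam a b := (@blambda B (a : BT B) (b : BT B) : BT B).

Lemma dir21 :
  (forall x : X, [set f y | y : X] = [set blambda b (f x) | b : B] /\
        brace_gen (f x) = setT) -> irreducible_cs op.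
Proof.
move=> hX Y [Ycl _].
case: (set_0Vmem Y) => [->|[y yY]]; [by left|right].
pose S : {set B} := f @: Y.
pose G : {set B} := [set g : B | [forall w in S, lam g w \in S]].
pose A : {set B} := [set a : B | [forall g in G, lam g a \in G]].
have inG (g : BT B) : (g \in G) = [forall w in S, lam g w \in S] by rewrite /G inE.
have inA (a : BT B) : (a \in A) = [forall g in G, lam g a \in G] by rewrite /A inE.
have G0 : (0 : BT B) \in G by rewrite inG; apply/forall_inP => w wS; rewrite lam0l.
have GM (g h : BT B) : g \in G -> h \in G -> (g \o h : BT B) \in G.
  rewrite !inG => /forall_inP Hg /forall_inP Hh; apply/forall_inP => w wS.
  by rewrite lamM; apply: (Hg); apply: (Hh).
have GV (g : BT B) : g \in G -> (binv g : BT B) \in G.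
  rewrite !inG => /forall_inP Hg; apply/forall_inP => w wS.
  have [w' w'S <-] := inj_onto (A := S) (h := fun w => lam g w) Hg
     (fun u v _ _ e => etrans (esym (lamVK g u)) (etrans (congr1 _ e) (lamVK g v))) wS.
  by rewrite lamVK.
have SG (w : BT B) : w \in S -> w \in G.
  case/imsetP => z zY ->.
  have : binv (f z) \in G.
    rewrite inG; apply/forall_inP => w' /imsetP [z' z'Y ->].
    have -> : lam (binv (f z)) (f z') = f (op z z') by rewrite fhom.
    by apply: imset_f; apply: Ycl.
  by move/GV; rewrite binvK.
have AG (a : BT B) : a \in A -> a \in G.
  by rewrite inA => /forall_inP H; have := H _ G0; rewrite lam0l.
have Ainv (a g : BT B) : a \in A -> g \in G -> (lam g a : BT B) \in A.
  rewrite !inA => /forall_inP Ha gG; apply/forall_inP => h hG.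
  by rewrite -lamM; apply: (Ha); apply: (GM).
have AD (a b : BT B) : a \in A -> b \in A -> (a + b : BT B) \in A.
  move=> aA bA; rewrite inA; apply/forall_inP => g gG.
  rewrite lamD.
  have a'A := Ainv _ _ aA gG; have b'A := Ainv _ _ bA gG.
  set a' := lam g a in a'A *; set b' := lam g b in b'A *.
  have -> : a' + b' = a' \o (lam (binv a') b') by rewrite circ_lam lamKV.
  apply: (GM); first exact: (AG).
  by apply: (AG); apply: (Ainv) => //; apply: (GV); apply: (AG).
have A0 : (0 : BT B) \in A by rewrite inA; apply/forall_inP => g gG; rewrite lam0.
have AM (a b : BT B) : a \in A -> b \in A -> (a \o b : BT B) \in A.
  move=> aA bA; rewrite circ_lam; apply: (AD) => //.
  by apply: (Ainv) => //; apply: (AG).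
have AN (a : BT B) : a \in A -> (- a : BT B) \in A.
  move=> aA.
  have [b bA e] := inj_onto (A := A) (h := fun b => a + b)
     (fun b bA => AD _ _ aA bA) (fun u v _ _ e => addrI a e) A0.
  by have -> : - a = (b : BT B) by apply/eqP; rewrite eq_sym -addr_eq0 addrC e.
have AV (a : BT B) : a \in A -> (binv a : BT B) \in A.
  move=> aA.
  have e : (binv a : BT B) = - lam (binv a) a.
    by apply/eqP; rewrite -addr_eq0 -circ_lam circVl.
  by rewrite e; apply: (AN); apply: (Ainv) => //; apply: (GV); apply: (AG).
have fyA : (f y : BT B) \in A.
  rewrite inA; apply/forall_inP => g gG; apply: (SG).
  by move: gG; rewrite inG => /forall_inP Hg; apply: (Hg); apply: imset_f.
have subA : is_subbrace A.
  apply/and5P; split.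
  - exact: A0.
  - by rewrite one0.
  - by apply/forall_inP => a aA; apply/forall_inP => b bA; apply: (AD).
  - by apply/forall_inP => a aA; apply: (AN).
  - apply/andP; split.
      by apply/forall_inP => a aA; apply/forall_inP => b bA; apply: (AM).
    by apply/forall_inP => a aA; apply: (AV).
have allA : forall b : BT B, b \in A.
  move=> b; have : b \in brace_gen (f y) by rewrite (proj2 (hX y)) inE.
  by move/(subsetP (bigcap_inf (F := id) _ (introT andP (conj subA fyA)))).
apply/setP => x; rewrite inE.
have : f x \in [set f y | y : X] by apply: imset_f.
rewrite (proj1 (hX y)) => /imsetP [b _ e].
have : f x \in S.
  have := AG _ (allA b); rewrite inG => /forall_inP H.
  by rewrite e; apply: (H); apply: imset_f.
by rewrite mem_imset.
Qed.
End Dir21.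

End GenM.
Import GenM.

Module WM.

Lemma perm_count_mem (T : eqType) (s1 s2 : seq T) :
  (forall z, count_mem z s1 = count_mem z s2) -> perm_eq s1 s2.
Proof.
elim: s1 s2 => [|x s1 IH] s2 h.
  case: s2 h => // y s2 h; have := h y; by rewrite /= eqxx.
have xs2 : x \in s2 by rewrite -has_pred1 has_count -h /= eqxx.
have p2 := perm_to_rem xs2.
rewrite (permPr p2) perm_cons; apply: IH => z.
have := h z; rewrite (seq.permP p2) /=; lia.
Qed.

Section W.
Variables (X : finType) (op : X -> X -> X).
Hypothesis cs : is_cycle_set op.
Local Open Scope group_scope.

Definition sig (x : X) : {perm X} := perm (bij_inj (proj1 cs x)).
Lemma sigE x y : sig x y = op x y. Proof. by rewrite permE. Qed.

Definition F (g : {perm X}) (w : seq X) := foldl (fun (g : {perm X}) (x : X) => g * sig (g x)) g w.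
Definition S w := F 1 w.

Lemma F_cat g u v : F g (u ++ v) = F (F g u) v.
Proof. by rewrite /F foldl_cat. Qed.

Lemma F_mul g w : F g w = g * S (map g w).
Proof.
move: {2}(size w) (erefl (size w)) => n; elim: n w g => [|n IH] [|x w] g //=.
all: try by rewrite /S /F /= mulg1.
case=> sw.
have e1 : S (g x :: map g w) = F (sig (g x)) (map g w) by rewrite /S /F /= mul1g perm1.
rewrite e1 (IH (map g w)) ?size_map // (IH w) // mulgA -map_comp.
by congr (_ * S _); apply: eq_map => y /=; rewrite permM.
Qed.

Lemma F_swap g x y r : F g [:: x, y & r] = F g [:: y, x & r].
Proof.
rewrite /F /=; congr foldl.
rewrite -!mulgA; congr (_ * _); apply/permP => z.
rewrite !permM !sigE.
by case: cs => _ ->.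
Qed.

Lemma F_cons g x w : F g (x :: w) = F (g * sig (g x)) w.
Proof. by []. Qed.

Lemma F_ins g x u v : F g (x :: u ++ v) = F g (u ++ x :: v).
Proof.
elim: u g => [|y u IH] g //.
by rewrite cat_cons F_swap F_cons IH.
Qed.

Lemma F_perm g w w' : perm_eq w w' -> F g w = F g w'.
Proof.
elim: w g w' => [|x w IH] g w' p.
  by move: p; rewrite perm_sym => /perm_nilP ->.
have xw' : x \in w' by rewrite -(perm_mem p) mem_head.
case/splitPr: xw' p => u v p.
have : perm_eq (x :: w) (x :: u ++ v).
  by apply: (perm_trans p); rewrite -[x :: v]cat1s perm_catCA.
rewrite perm_cons -F_ins => {}p.
by rewrite !F_cons (IH _ _ p).
Qed.

Lemma S_perm w w' : perm_eq w w' -> S w = S w'.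
Proof. exact: F_perm. Qed.

Lemma S_cat u v : S (u ++ v) = S u * S (map (S u) v).
Proof. by rewrite /S F_cat -/(S u) F_mul. Qed.

Lemma map_perm1 (w : seq X) : map (1 : {perm X}) w = w.
Proof. by rewrite (eq_map (@perm1 X)) map_id. Qed.

Lemma S1cat u v : S u = 1 -> S (u ++ v) = S v.
Proof. by move=> h; rewrite S_cat h mul1g map_perm1. Qed.

Lemma Sk_map k u : S k = 1 -> S (map (S u) k) = 1.
Proof.
move=> hk; have p : perm_eq (u ++ k) (k ++ u) by rewrite perm_catC.
have := S_perm p.
rewrite S_cat S_cat hk mul1g map_perm1 => e.
by apply: (mulgI (S u)); rewrite mulg1.
Qed.

Lemma Sk_mapX k u m : S k = 1 -> S (map (S u ^+ m) k) = 1.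
Proof.
elim: m k => [|m IH] k hk; first by rewrite expg0 map_perm1.
rewrite expgS (eq_map (permM _ _)) map_comp; apply: IH; exact: Sk_map.
Qed.

Lemma S_nseq_mul y d q : S (nseq d y) = 1 -> S (nseq (d * q) y) = 1.
Proof.
move=> h; elim: q => [|q IH]; first by rewrite muln0.
by rewrite mulnS nseqD S1cat.
Qed.

Lemma exists_period y : exists2 d, 0 < d <= #|{perm X}| & S (nseq d y) = 1.
Proof.
pose f (i : 'I_(#|{perm X}|.+1)) := S (nseq i y).
have [/existsP [i /existsP [j /andP [ij /eqP fij]]]|nex] :=
  boolP [exists i : 'I_(#|{perm X}|.+1), exists j : 'I_(#|{perm X}|.+1), (i < j)%N && (f i == f j)].
  have ltj := ltn_ord j.
  exists (j - i)%N; first by apply/andP; split; lia.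
  have e : S (nseq j y) = S (nseq i y) * S (map (S (nseq i y)) (nseq (j - i) y)).
    by rewrite -S_cat -nseqD subnKC // ltnW.
  have e2 : S (map (S (nseq i y)) (nseq (j - i) y)) = 1.
    by apply: (mulgI (S (nseq i y))); rewrite mulg1 -e.
  set g := S (nseq i y) in e2.
  have := Sk_mapX (nseq i y) (#[g].-1) e2.
  have hy : (g ^+ #[g].-1) (g y) = y.
    by rewrite -permM -expgS prednK ?order_gt0 // expg_order perm1.
  by rewrite !map_nseq hy.
exfalso.
have inj : injective f.
  move=> i j e; apply: val_inj; apply/eqP; case: (ltngtP i j) => // h.
  - by move: nex; rewrite negb_exists => /forallP /(_ i); rewrite negb_exists => /forallP /(_ j); rewrite h e eqxx.
  - by move: nex; rewrite negb_exists => /forallP /(_ j); rewrite negb_exists => /forallP /(_ i); rewrite h e eqxx.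
by have := leq_card f inj; rewrite card_ord ltnn.
Qed.

Definition M0 := (#|{perm X}|.+1)`!.
Lemma M0_gt1 : (1 < M0)%N.
Proof.
rewrite /M0 factS; have := fact_gt0 #|{perm X}|.
have : (0 < #|{perm X}|)%N by apply/card_gt0P; exists 1.
by move=> h1 h2; nia.
Qed.

Lemma S_M0q y q : S (nseq (M0 * q) y) = 1.
Proof.
have [d /andP [d0 dle] hd] := exists_period y.
have : (d %| M0)%N by apply: dvdn_fact; rewrite d0 /= leqW.
move=> /divnK <-; rewrite mulnAC mulnC.
exact: S_nseq_mul.
Qed.

Definition cw (c : X -> nat) := flatten [seq nseq (c y) y | y <- enum X].

Lemma cw_ext c1 c2 : c1 =1 c2 -> cw c1 = cw c2.
Proof. by move=> h; rewrite /cw; congr flatten; apply: eq_map => y; rewrite h. Qed.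

Lemma count_cw c z : count_mem z (cw c) = c z.
Proof.
rewrite /cw count_flatten -map_comp.
rewrite (eq_map (g := fun y => ((y == z) * c y)%N)); last by move=> y /=; rewrite count_nseq.
rewrite sumnE big_map big_enum /= (bigD1 z) //= eqxx mul1n big1 ?addn0 //.
by move=> y /negbTE ->.
Qed.

Lemma S_counts w : S w = S (cw (fun z => count_mem z w)).
Proof. by apply: S_perm; apply: perm_count_mem => z; rewrite count_cw. Qed.

Lemma S_cw_mult q s : S (flatten [seq nseq (M0 * q y) y | y <- s]) = 1.
Proof.
elim: s => [|y s IH] //=.
by rewrite S1cat ?S_M0q.
Qed.

Lemma S_cw_mod c : S (cw c) = S (cw (fun z => c z %% M0)).
Proof.
have p : perm_eq (cw c) (cw (fun z => (M0 * (c z %/ M0))%N) ++ cw (fun z => c z %% M0)).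
  apply: perm_count_mem => z; rewrite count_cat !count_cw.
  by rewrite {1}(divn_eq (c z) M0) mulnC.
by rewrite (S_perm p) S1cat // /cw S_cw_mult.
Qed.

Lemma Scong w1 w2 : (forall z, count_mem z w1 %% M0 = count_mem z w2 %% M0) -> S w1 = S w2.
Proof.
move=> h; rewrite S_counts (S_counts w2) S_cw_mod (S_cw_mod (fun z => count_mem z w2)).
by rewrite (cw_ext h).
Qed.
End W.

End WM.
Import WM.

Module CM.

Section C.
Variables (X : finType) (op : X -> X -> X).
Hypothesis cs : is_cycle_set op.
Local Notation N := (M0 X).
Definition V := {ffun X -> 'Z_N}.
Local Open Scope ring_scope.

Lemma NE : (Zp_trunc N).+2 = N. Proof. exact: Zp_cast (M0_gt1 X). Qed.

Lemma valD (a b : 'Z_N) : nat_of_ord (a + b) = ((a + b) %% N)%N.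
Proof.
have e : nat_of_ord (a + b) = ((a + b) %% (Zp_trunc N).+2)%N by [].
by rewrite e; congr (_ %% _)%N; exact: NE.
Qed.

Definition sv (a : V) : {perm X} := S cs (cw (fun y => nat_of_ord (a y))).
Definition lamc (a b : V) : V := [ffun z => b (sv a z)].

Lemma count_map_perm (h : {perm X}) z w :
  count_mem z (map h w) = count_mem ((h^-1)%g z) w.
Proof.
rewrite count_map; apply: eq_count => y /=.
by apply/eqP/eqP => [<-|->]; [rewrite permK | rewrite permKV].
Qed.

Lemma sv_key a b : sv (a + lamc a b) = (sv a * sv b)%g.
Proof.
set g := sv a.
have h1 : sv (a + lamc a b) =
    S cs (cw (fun y => nat_of_ord (a y)) ++ map (g^-1)%g (cw (fun y => nat_of_ord (b y)))).
  apply: Scong => z; rewrite count_cat count_map_perm !count_cw invgK.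
  by rewrite !ffunE valD modn_mod.
by rewrite h1 S_cat -/(sv a) -/g -map_comp (eq_map (permKV g)) map_id.
Qed.

Lemma sv0 : sv 0 = 1%g.
Proof.
rewrite /sv (@S_perm _ _ cs _ [::]) //; apply: perm_count_mem => z.
by rewrite count_cw ffunE.
Qed.

Definition circ (a b : V) : V := a + lamc a b.
Definition inv (a : V) : V := [ffun z => - a ((sv a)^-1%g z)].

Lemma lamcD a b c : lamc a (b + c) = lamc a b + lamc a c.
Proof. by apply/ffunP => z; rewrite !ffunE. Qed.
Lemma lamc0 a : lamc a 0 = 0.
Proof. by apply/ffunP => z; rewrite !ffunE. Qed.
Lemma lamcM a b c : lamc (circ a b) c = lamc a (lamc b c).
Proof. by apply/ffunP => z; rewrite !ffunE /circ sv_key permM. Qed.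
Lemma lamc1 c : lamc 0 c = c.
Proof. by apply/ffunP => z; rewrite !ffunE sv0 perm1. Qed.

Lemma circA a b c : circ a (circ b c) = circ (circ a b) c.
Proof. by rewrite /circ lamcD lamcM addrA. Qed.
Lemma circ1 a : circ 0 a = a.
Proof. by rewrite /circ add0r lamc1. Qed.
Lemma circ0r a : circ a 0 = a.
Proof. by rewrite /circ lamc0 addr0. Qed.
Lemma circVr a : circ a (inv a) = 0.
Proof.
rewrite /circ; have -> : lamc a (inv a) = - a.
  by apply/ffunP => z; rewrite !ffunE permK.
by rewrite subrr.
Qed.
Lemma circVl a : circ (inv a) a = 0.
Proof.
have e : a = inv (inv a).
  transitivity (circ a (circ (inv a) (inv (inv a)))); first by rewrite circVr circ0r.
  by rewrite circA circVr circ1.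
by rewrite {2}e circVr.
Qed.
Lemma circD a b c : circ a (b + c) = circ a b - a + circ a c.
Proof. by rewrite /circ lamcD [a + lamc a b]addrC addrK addrCA. Qed.

Definition Bc : fin_brace :=
  @FinBrace (V : finType) +%R 0 -%R circ 0 inv
    (@addrA _) (@addrC _) (@add0r _) (@addNr _) circA circ1 circVl circD.
End C.

End CM.
Import CM.

Section Fin.
Variables (X : finType) (op : X -> X -> X).
Hypothesis cs : is_cycle_set op.
Local Notation N := (M0 X).
Local Open Scope ring_scope.

Definition e (x : X) : V X := [ffun y => (y == x)%:R].

Lemma blamE (b a : V X) : @blambda (Bc cs) b a = lamc cs b a.
Proof. by rewrite /blambda /= addKr. Qed.

Lemma e_inj : injective e.
Proof.
move=> x y h; have := congr1 (fun v : V X => v x) h; rewrite !ffunE eqxx.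
by case: eqP => // _ /eqP; rewrite oner_eq0.
Qed.

Lemma sv_e x : sv cs (e x) = sig cs x.
Proof.
rewrite /sv (@S_perm _ _ cs _ [:: x]).
  by rewrite /S /F /= mul1g perm1.
apply: perm_count_mem => z; rewrite count_cw ffunE /=.
rewrite val_Zp_nat ?M0_gt1 // modn_small //.
  by rewrite addn0 eq_sym.
by have := M0_gt1 X; case: (z == x) => /=; lia.
Qed.


Lemma e_hom x y : e (op x y) = @bdot (Bc cs) (e x) (e y).
Proof.
rewrite /bdot.
have h : @blambda (Bc cs) (e x) (e (op x y)) = e y.
  rewrite blamE; apply/ffunP => z; rewrite !ffunE sv_e sigE.
  by rewrite (inj_eq (bij_inj (proj1 cs x))).
by rewrite -h (lamVK (B := Bc cs)).
Qed.

Lemma lamc_e b x : lamc cs b (e x) = e ((sv cs b)^-1%g x).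
Proof.
apply/ffunP => z; rewrite !ffunE.
have -> : (sv cs b z == x) = (z == (sv cs b)^-1%g x).
  by apply/eqP/eqP => [<-|->]; [rewrite permK | rewrite permKV].
by [].
Qed.

Lemma orbit_all (irr : irreducible_cs op) x y :
  exists b : Bc cs, e y = blambda b (e x).
Proof.
pose O := [set y | [exists b : Bc cs, blambda b (e x) == e y]].
have xO : x \in O by rewrite inE; apply/existsP; exists (0 : V X); rewrite blamE lamc1.
have : is_sub_cycle_set op O.
  apply: subcs => // u v; rewrite !inE => /existsP [b /eqP hb] /existsP [c /eqP hc].
  apply/existsP; exists (bcirc (binv (e u : Bc cs)) c); apply/eqP.
  by rewrite e_hom /bdot -hc (lamM (B := Bc cs)).
case/irr => [O0|OT]; first by move: xO; rewrite O0 inE.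
have : y \in O by rewrite OT inE.
by rewrite inE => /existsP [b /eqP <-]; exists b.
Qed.

Lemma gen_all (irr : irreducible_cs op) x : brace_gen (e x : Bc cs) = setT.
Proof.
apply/setP => v; rewrite inE; apply/bigcapP => Sb /andP [sb xS].
case/and5P: sb => z0 _ /forall_inP hadd /forall_inP hopp /andP [/forall_inP hcirc /forall_inP hinv].
have addS (a b : V X) : a \in Sb -> b \in Sb -> a + b \in Sb.
  by move=> aS bS; have /forall_inP := hadd a aS; apply.
pose Y := [set y | (e y : Bc cs) \in Sb].
have : is_sub_cycle_set op Y.
  apply: subcs => // u w; rewrite !inE => uS wS.
  rewrite e_hom /bdot /blambda; apply: addS; first by apply: hopp; apply: hinv.
  by have /forall_inP := hcirc _ (hinv _ uS); apply.
have xY : x \in Y by rewrite inE.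
case/irr => [Y0|YT]; first by move: xY; rewrite Y0 inE.
have eS y : (e y : Bc cs) \in Sb.
  have : y \in Y by rewrite YT inE.
  by rewrite inE.
have eSn y n : (e y *+ n : V X) \in Sb.
  elim: n => [|n IH]; first by rewrite mulr0n.
  by rewrite mulrS; apply: addS.
have -> : v = \sum_(y : X) (e y *+ nat_of_ord ((v : V X) y)).
  apply/ffunP => z; rewrite sum_ffunE (bigD1 z) //= big1 ?addr0.
    by rewrite ffunMnE ffunE eqxx natr_Zp.
  by move=> y /negbTE yz; rewrite ffunMnE ffunE eq_sym yz mul0rn.
by apply: (big_ind (fun w : V X => w \in Sb)) => // a b; apply: addS.
Qed.
End Fin.

Theorem mainTheorem2 (X : finType) (op : X -> X -> X) :
  is_cycle_set op ->
  (irreducible_cs op <->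
   exists (B : fin_brace) (f : X -> B),
     injective f /\
     (forall x y : X, f (op x y) = bdot (f x) (f y)) /\
     (forall x : X,
        [set f y | y : X] = [set blambda b (f x) | b : B] /\
        brace_gen (f x) = setT)).
Proof.
move=> cs; split; last first.
  by case=> B [f [finj [fhom hX]]]; apply: (dir21 finj fhom hX).
move=> irr; exists (Bc cs), (@e X : X -> Bc cs).
split; first exact: e_inj.
split; first exact: e_hom.
move=> x; split; last exact: gen_all cs irr x.
apply/setP => v; apply/imsetP/imsetP => [[y _ ->]|[b _ ->]].
  by have [b hb] := orbit_all cs irr x y; exists b.
by exists ((sv cs b)^-1%g x) => //; rewrite blamE lamc_e.
Qed.
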